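(* Let $G$ be a finite abelian group, $\Phi$ a normalized $3$-cocycle on $G$, and suppose $\{g_1,\dots,g_n\}\subseteq G$ generates $G$ and $\widetilde{\Phi}_{g_i}(g_j,g_k)=\widetilde{\Phi}_{g_i}(g_k,g_j)$ for all $1\le i,j,k\le n$. Then $\Phi$ is an abelian $3$-cocycle on $G$.
   Context: $\mathbbm{k}$ is algebraically closed of characteristic zero; $\Phi$ takes values in $\mathbbm{k}^*$. For $g\in G$, $\widetilde{\Phi}_g(x,y)=\frac{\Phi(g,x,y)\Phi(x,y,g)}{\Phi(x,g,y)}$. The category ${}^{\mathbbm{k}G}_{\mathbbm{k}G}\mathcal{YD}^{\Phi}$ has objects the $G$-graded vector spaces $V=\bigoplus_gV_g$ with operators $e\triangleright-$ preserving each $V_g$, $1\triangleright v=v$, $e\triangleright(f\triangleright v)=\widetilde{\Phi}_g(e,f)(ef)\triangleright v$ for $v\in V_g$. $\Phi$ is abelian if every simple object of ${}^{\mathbbm{k}G}_{\mathbbm{k}G}\mathcal{YD}^{\Phi}$ is $1$-dimensional. *)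

(* Defs.v *)
From HB Require Import structures.
From mathcomp Require Import all_boot all_order all_fingroup all_algebra.
Set Implicit Arguments. Unset Strict Implicit. Unset Printing Implicit Defensive.
Import GRing.Theory.
Local Open Scope ring_scope.

Section YD.
Variables (k : fieldType) (G : finGroupType).

Definition Phit (Phi : G -> G -> G -> k) (g x y : G) : k :=
  Phi g x y * Phi x y g / Phi x g y.

Definition nonvanishing (Phi : G -> G -> G -> k) :=
  forall x y z, Phi x y z != 0.

Definition normalized_3cocycle (Phi : G -> G -> G -> k) :=
  nonvanishing Phi /\
  (forall e f g h : G,
     Phi (e * f)%g g h * Phi e f (g * h)%g
     = Phi e f g * Phi e (f * g)%g h * Phi f g h) /\
  (forall x y : G, Phi 1%g x y = 1 /\ Phi x 1%g y = 1 /\ Phi x y 1%g = 1).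

(* An object of the category YD^Phi (finite-dimensional presentation):
   the homogeneous component V_g is k^(ydim g) (row vectors), and the
   operator e |> - on V_g is v |-> v *m yact g e. *)
Record YDobj (Phi : G -> G -> G -> k) := {
  ydim : G -> nat;
  yact : forall g : G, G -> 'M[k]_(ydim g);
  yact1 : forall g, yact g 1%g = 1%:M;
  yactM : forall g e f,
    yact g f *m yact g e = Phit Phi g e f *: yact g (e * f)%g
}.

Definition ytotdim Phi (X : YDobj Phi) : nat := (\sum_(g : G) ydim X g)%N.

(* A subobject is a family of subspaces W_g <= V_g (row spaces) stable
   under all the operators; X is simple iff it is nonzero and its only
   subobjects are 0 and X itself. *)
Definition ysimple Phi (X : YDobj Phi) : Prop :=
  (0 < ytotdim X)%N /\
  forall W : forall g : G, 'M[k]_(ydim X g),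
    (forall g e, stablemx (W g) (yact X g e)) ->
    (forall g, W g = 0) \/ (forall g, row_full (W g)).

Definition abelian_cocycle (Phi : G -> G -> G -> k) : Prop :=
  forall X : YDobj Phi, ysimple X -> ytotdim X = 1%N.

End YD.

(* Main.v *)
Require Import Defs.
From HB Require Import structures.
From mathcomp Require Import all_boot all_order all_fingroup all_algebra.
From mathcomp Require Import ring.
Local Open Scope ring_scope.

Set Implicit Arguments. Unset Strict Implicit. Unset Printing Implicit Defensive.
Import GRing.Theory.

Section Alg.
Variables (k : fieldType) (G : finGroupType) (Phi : G -> G -> G -> k).
Hypothesis Hc : forall a b : G, (a * b = b * a)%g.
Hypothesis Hnz : forall a b c, Phi a b c != 0.
Hypothesis Hco : forall e f g h : G,
     Phi (e * f)%g g h * Phi e f (g * h)%g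
     = Phi e f g * Phi e (f * g)%g h * Phi f g h.

Definition dPhi a b c d := Phi b c d * Phi a (b*c)%g d * Phi a b c / (Phi (a*b)%g c d * Phi a b (c*d)%g).
Lemma dPhi1 a b c d : dPhi a b c d = 1.
Proof. rewrite /dPhi Hco. field. by rewrite !Hnz. Qed.
Definition beta g x y := Phit Phi g x y / Phit Phi g y x.

Lemma betaA g x y z : beta g (x*y)%g z = beta g x z * beta g y z.
Proof.
have key : beta g (x*y)%g z = beta g x z * beta g y z *
  ((dPhi g x y z) * (dPhi g z x y) * (dPhi x g z y) * (dPhi x y g z) * (dPhi x z y g) * (dPhi z x g y)  /  (dPhi g x z y) / (dPhi x g y z) / (dPhi x y z g) / (dPhi x z g y) / (dPhi z g x y) / (dPhi z x y g)).
  rewrite /beta /Phit /dPhi.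
  rewrite ?(Hc x g) ?(Hc y g) ?(Hc z g) ?(Hc y x) ?(Hc z x) ?(Hc z y).
  field. by rewrite !Hnz.
by rewrite key !dPhi1 !(mulr1, div1r, invr1).
Qed.

Lemma betaC g h x y : beta (g*h)%g x y = beta g x y * beta h x y.
Proof.
have key : beta (g*h)%g x y = beta g x y * beta h x y *
  ((dPhi g h y x) * (dPhi g x h y) * (dPhi g y x h) * (dPhi x g y h) * (dPhi y g h x) * (dPhi y x g h)  /  (dPhi g h x y) / (dPhi g x y h) / (dPhi g y h x) / (dPhi x g h y) / (dPhi x y g h) / (dPhi y g x h)).
  rewrite /beta /Phit /dPhi.
  rewrite ?(Hc h g) ?(Hc x g) ?(Hc y g) ?(Hc x h) ?(Hc y h) ?(Hc y x).
  field. by rewrite !Hnz.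
by rewrite key !dPhi1 !(mulr1, div1r, invr1).
Qed.

Lemma Phit_nz g x y : Phit Phi g x y != 0.
Proof. by rewrite /Phit !(mulf_neq0, invr_neq0). Qed.

Lemma beta_nz g x y : beta g x y != 0.
Proof. by rewrite /beta !(mulf_neq0, invr_neq0, Phit_nz). Qed.

Lemma betaV g x y : beta g y x = (beta g x y)^-1.
Proof. by rewrite /beta invf_div. Qed.

Lemma beta_idem (b : k) : b != 0 -> b = b * b -> b = 1.
Proof.
move=> nz e; apply: (mulfI nz); by rewrite mulr1 -e.
Qed.

Lemma beta1g x y : beta 1%g x y = 1.
Proof. apply: beta_idem (beta_nz _ _ _) _; by rewrite -betaC mulg1. Qed.

Lemma betag1 g y : beta g 1%g y = 1.
Proof. apply: beta_idem (beta_nz _ _ _) _; by rewrite -betaA mulg1. Qed.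

Lemma betagx1 g x : beta g x 1%g = 1.
Proof. by rewrite betaV betag1 invr1. Qed.

Lemma betaA' g x y z : beta g x (y*z)%g = beta g x y * beta g x z.
Proof. by rewrite betaV betaA invfM -!betaV. Qed.

Lemma beta1_sym g x y : beta g x y = 1 -> Phit Phi g x y = Phit Phi g y x.
Proof.
rewrite /beta => e.
by rewrite -(divfK (Phit_nz g y x) (Phit Phi g x y)) e mul1r.
Qed.
End Alg.

Lemma gen_closed (gT : finGroupType) (S : {set gT}) (P : pred gT) :
  P 1%g -> (forall a b, P a -> P b -> P (a*b)%g) -> (forall a, a \in S -> P a) ->
  forall x, x \in <<S>>%g -> P x.
Proof.
move=> P1 PM PS x.
have gH : group_set [set a | P a].
  apply/group_setP; split; first by rewrite inE.
  by move=> a b; rewrite !inE; apply: PM.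
have : (<<S>> \subset Group gH)%g.
  by rewrite gen_subG; apply/subsetP=> a /PS; rewrite inE.
by move/subsetP => sub /sub; rewrite inE.
Qed.

Theorem lemma4p5 (k : closedFieldType) (G : finGroupType)
  (Phi : G -> G -> G -> k) (S : {set G}) :
  [pchar k] =i pred0 ->
  abelian [set: G] ->
  normalized_3cocycle Phi ->
  <<S>>%g = [set: G] ->
  (forall gi gj gk, gi \in S -> gj \in S -> gk \in S ->
     Phit Phi gi gj gk = Phit Phi gi gk gj) ->
  abelian_cocycle Phi.
Proof.
move=> _ Hab [Hnz [Hco _]] HS Hsym.
have Hc : forall a b : G, (a * b = b * a)%g.
  by move=> a b; apply: (centsP Hab); rewrite inE.
have Hsym1 : forall g x y, g \in S -> x \in S -> y \in S -> beta Phi g x y = 1.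
  move=> g x y gS xS yS; rewrite /beta Hsym // divff //; exact: Phit_nz.
have HT : forall g : G, g \in <<S>>%g by move=> g; rewrite HS inE.
have Hb1 : forall g x y, x \in S -> y \in S -> beta Phi g x y = 1.
  move=> g x y xS yS; apply/eqP; apply: (@gen_closed _ S (fun g => beta Phi g x y == 1) _ _ _ g (HT g)) => //.
  - by rewrite beta1g.
  - by move=> a b /eqP a1 /eqP b1; rewrite betaC // a1 b1 mulr1.
  - by move=> a aS; rewrite Hsym1.
have Hb2 : forall g x y, y \in S -> beta Phi g x y = 1.
  move=> g x y yS; apply/eqP; apply: (@gen_closed _ S (fun x => beta Phi g x y == 1) _ _ _ x (HT x)) => //.
  - by rewrite betag1.
  - by move=> a b /eqP a1 /eqP b1; rewrite betaA // a1 b1 mulr1.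
  - by move=> a aS; rewrite Hb1.
have Hb3 : forall g x y, beta Phi g x y = 1.
  move=> g x y; apply/eqP; apply: (@gen_closed _ S (fun y => beta Phi g x y == 1) _ _ _ y (HT y)) => //.
  - by rewrite betagx1.
  - by move=> a b /eqP a1 /eqP b1; rewrite betaA' // a1 b1 mulr1.
  - by move=> a aS; rewrite Hb2.
have Hall : forall g x y, Phit Phi g x y = Phit Phi g y x.
  by move=> g x y; apply: beta1_sym => //; apply: Hb3.
clear Hb1 Hb2 Hb3 Hsym1 Hsym.
move=> X [Hpos Hsimp].
have [g0 Hg0] : exists g0, (0 < ydim X g0)%N.
  case: (pickP (fun g => (0 < ydim X g)%N)) => [g0 Hg0 | H0]; first by exists g0.
  move: Hpos; rewrite /ytotdim big1 // => g _; apply/eqP; by rewrite -leqn0 leqNgt H0.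
have Hz : forall g, g != g0 -> ydim X g = 0%N.
  move=> g ne.
  have [H0|Hfull] := Hsimp (fun g => if g == g0 then 1%:M else 0) (fun g e =>
     if g == g0 as b return stablemx (if b then 1%:M else 0) (yact X g e)
     then stablemx_unit _ (unitmx1 _ _) else stable0mx _ _ ).
  - move: (H0 g0); rewrite eqxx => /(congr1 mxrank); rewrite mxrank1 mxrank0.
    by move=> e; rewrite e in Hg0.
  - by move: (Hfull g); rewrite (negbTE ne) /row_full mxrank0 eq_sym => /eqP.
have -> : ytotdim X = ydim X g0.
  by rewrite /ytotdim (bigD1 g0) //= big1 ?addn0 // => g /Hz.
have Hcomm : forall e f, comm_mx (yact X g0 e) (yact X g0 f).
  move=> e f; rewrite /comm_mx !yactM Hall Hc //.
have Hscal : forall e, exists l, yact X g0 e = l%:M.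
  move=> e.
  have [l rl] : exists l, root (char_poly (yact X g0 e)) l.
    apply/closed_rootP; rewrite size_char_poly; by case: (ydim X g0) Hg0.
  move: rl; rewrite -eigenvalue_root_char => ev.
  have Hst : forall g f : G, stablemx (if g == g0 then eigenspace (yact X g e) l else 0) (yact X g f).
    move=> g f; case: (g =P g0) => [eg | _]; last exact: stable0mx; subst g.
    by apply: comm_mx_stable_eigenspace; apply: Hcomm.
  have [H0|Hfull] := Hsimp (fun g => if g == g0 then eigenspace (yact X g e) l else 0) Hst.
  - by move: ev; rewrite /eigenvalue; move: (H0 g0); rewrite eqxx => ->; rewrite eqxx.
  - exists l; move: (Hfull g0); rewrite eqxx => /(submx_full 1%:M) /eigenspaceP.
    by rewrite mul1mx scalemx1.
have Hst (g f : G) : stablemx (if g == g0 then pid_mx 1 else 0 : 'M_(ydim X g)) (yact X g f).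
  case: (g =P g0) => [eg | _]; last by rewrite mul0mx sub0mx.
  subst g; have [l ->] := Hscal f; rewrite mul_mx_scalar; apply: scalemx_sub; exact: submx_refl.
have [H0|Hfull] := Hsimp (fun g => if g == g0 then pid_mx 1 else 0) Hst.
- by move: (H0 g0); rewrite eqxx => /(congr1 mxrank); rewrite rank_pid_mx // mxrank0.
- by move: (Hfull g0); rewrite eqxx /row_full rank_pid_mx // eq_sym => /eqP.
Qed.
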